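(* For every annotated type $\theta$ and every ascending chain $u:\mathbb{N}\to[\![\theta^*]\!]_{\bot\star}$, if $\mathsf{safe}\,\theta\,(u_i)$ holds for all $i$, then $\mathsf{safe}\,\theta\,(\bigsqcup_i u_i)$ holds.
   Context: Fix sets $\mathsf{Principals}$, $\mathsf{Privileges}$. Types $t::=\mathtt{bool}\mid t_1\to t_2$. $\bot,\star$ are two distinct values that are neither booleans nor functions. For a cpo $C$ (poset with lubs of ascending chains), $C_{\bot\star}=C\cup\{\bot,\star\}$ with $u\le v$ iff $u=\bot$, or $u=v$, or $u,v\in C$ and $u\le v$ in $C$. $[\![\mathtt{bool}]\!]=\{\mathsf{true},\mathsf{false}\}$ ordered by equality; $\mathcal{P}(\mathsf{Privileges})$ ordered by equality; $[\![t_1\to t_2]\!]=\mathcal{P}(\mathsf{Privileges})\to[\![t_1]\!]\to[\![t_2]\!]_{\bot\star}$, continuous functions ordered pointwise (lubs pointwise). Annotated types: $\theta::=\mathtt{bool}\mid\theta_1\xrightarrow{\Pi}\theta_2$ with $\Pi\subseteq\mathsf{Privileges}$; erasure $\mathtt{bool}^*=\mathtt{bool}$, $(\theta_1\xrightarrow{\Pi}\theta_2)^*=\theta_1^*\to\theta_2^*$. The predicate $\mathsf{safe}\,\theta$ on $[\![\theta^*]\!]_{\bot\star}$: $\mathsf{safe}\,\theta(\bot)$ is true and $\mathsf{safe}\,\theta(\star)$ is false for all $\theta$; otherwise $\mathsf{safe}\,\mathtt{bool}(b)$ is true, and $\mathsf{safe}(\theta_1\xrightarrow{\Pi}\theta_2)(f)$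 iff for all $P\subseteq\mathsf{Privileges}$ and all $d\in[\![\theta_1^*]\!]$, $\Pi\subseteq P$ and $\mathsf{safe}\,\theta_1(d)$ imply $\mathsf{safe}\,\theta_2(fPd)$. *)

(* Defs.v *)
Set Implicit Arguments.

(* Subsets of Privileges, i.e. P(Privileges); ordered by equality (discrete). *)
Definition Pset (Priv : Type) := Priv -> Prop.
Definition psubset {Priv : Type} (A B : Pset Priv) : Prop := forall x, A x -> B x.

Definition ascending {A : Type} (le : A -> A -> Prop) (u : nat -> A) : Prop :=
  forall i, le (u i) (u (S i)).
Definition is_lub {A : Type} (le : A -> A -> Prop) (u : nat -> A) (l : A) : Prop :=
  (forall i, le (u i) l) /\ (forall m, (forall i, le (u i) m) -> le l m).
Definition monotone {A B : Type} (leA : A -> A -> Prop) (leB : B -> B -> Prop)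
  (f : A -> B) : Prop := forall x y, leA x y -> leB (f x) (f y).
Definition continuous {A B : Type} (leA : A -> A -> Prop) (leB : B -> B -> Prop)
  (f : A -> B) : Prop :=
  monotone leA leB f /\
  (forall u l, ascending leA u -> is_lub leA u l -> is_lub leB (fun i => f (u i)) (f l)).

Inductive lift (A : Type) : Type :=
| Bot : lift A
| Star : lift A
| Val : A -> lift A.
Arguments Bot {A}. Arguments Star {A}. Arguments Val {A} _.

(* u <= v iff u = ⊥, or u = v, or u,v ∈ C with u <= v in C
   (the case u = v ∈ C is subsumed by reflexivity of the order on C). *)
Definition le_lift {A : Type} (le : A -> A -> Prop) (u v : lift A) : Prop :=
  match u, v with
  | Bot, _ => True
  | Star, Star => True
  | Val a, Val b => le a b
  | _, _ => False
  end.

Inductive ty : Type := TBool | TArr (t1 t2 : ty).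

(* Since P(Privileges) is discretely ordered,
   continuity in the first argument is automatic, so only continuity of
   each f P : [[t1]] -> [[t2]]_{bot,star} is required. *)
Fixpoint dom (Priv : Type) (t : ty) : {A : Type & A -> A -> Prop} :=
  match t with
  | TBool => existT (fun A : Type => A -> A -> Prop) (bool : Type) (@eq bool)
  | TArr t1 t2 =>
      existT (fun A : Type => A -> A -> Prop)
        {f : Pset Priv -> projT1 (dom Priv t1) -> lift (projT1 (dom Priv t2))
           | forall P, continuous (projT2 (dom Priv t1))
                                  (le_lift (projT2 (dom Priv t2))) (f P)}
        (fun f g => forall P d,
            le_lift (projT2 (dom Priv t2)) (proj1_sig f P d) (proj1_sig g P d))
  end.

Definition carrier (Priv : Type) (t : ty) : Type := projT1 (dom Priv t).
Definition le_dom (Priv : Type) (t : ty) : carrier Priv t -> carrier Priv t -> Prop :=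
  projT2 (dom Priv t).

Inductive aty (Priv : Type) : Type :=
| ABool : aty Priv
| AArr : aty Priv -> Pset Priv -> aty Priv -> aty Priv.
Arguments ABool {Priv}.

Fixpoint erase {Priv : Type} (th : aty Priv) : ty :=
  match th with
  | ABool => TBool
  | AArr th1 _ th2 => TArr (erase th1) (erase th2)
  end.

Fixpoint safe {Priv : Type} (th : aty Priv) : lift (carrier Priv (erase th)) -> Prop :=
  match th return lift (carrier Priv (erase th)) -> Prop with
  | ABool => fun v => match v with Bot => True | Star => False | Val _ => True end
  | AArr th1 Pi th2 => fun v =>
      match v with
      | Bot => True
      | Star => False
      | Val f => forall (P : Pset Priv) (d : carrier Priv (erase th1)),
          psubset Pi P -> safe th1 (Val d) -> safe th2 (proj1_sig f P d)
      end
  end.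

(* Main.v *)
Require Import Defs.
From Stdlib Require Import Arith Lia ClassicalEpsilon.

Lemma le_lift_refl {A} (le : A -> A -> Prop) : (forall x, le x x) -> forall v, le_lift le v v.
Proof. intros H [| |a]; simpl; auto. Qed.

Lemma le_lift_trans {A} (le : A -> A -> Prop) :
  (forall x y z, le x y -> le y z -> le x z) ->
  forall u v w, le_lift le u v -> le_lift le v w -> le_lift le u w.
Proof. intros H [| |a] [| |b] [| |c]; simpl; try tauto; eauto. Qed.

Lemma le_dom_refl Priv t : forall x, le_dom Priv t x x.
Proof.
  induction t as [|t1 IH1 t2 IH2]; unfold le_dom, carrier in *; simpl.
  - reflexivity.
  - intros f P d. apply le_lift_refl. exact IH2.
Qed.

Lemma le_dom_trans Priv t : forall x y z, le_dom Priv t x y -> le_dom Priv t y z -> le_dom Priv t x z.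
Proof.
  induction t as [|t1 IH1 t2 IH2]; unfold le_dom, carrier in *; simpl.
  - intros; congruence.
  - intros f g h H1 H2 P d. eapply le_lift_trans; eauto.
Qed.

Lemma chain_le {A} (le : A -> A -> Prop) (refl : forall x, le x x)
  (trans : forall x y z, le x y -> le y z -> le x z) u :
  ascending le u -> forall i j, i <= j -> le (u i) (u j).
Proof.
  intros Ha i j Hij. induction Hij; auto. eapply trans; eauto.
Qed.

Definition chain_complete {A} (le : A -> A -> Prop) :=
  forall u, ascending le u -> exists l, is_lub le u l.

Lemma lift_complete {A} (le : A -> A -> Prop) (refl : forall x, le x x)
  (trans : forall x y z, le x y -> le y z -> le x z) :
  chain_complete le -> chain_complete (le_lift le).
Proof.
  intros HC u Ha.
  assert (rl := le_lift_refl le refl). assert (tl := le_lift_trans le trans).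
  assert (Hcl := chain_le _ rl tl u Ha).
  destruct (classic (exists i, u i <> Bot)) as [[i Hi]|Hn].
  - destruct (u i) as [| |a] eqn:Eu; [congruence| |].
    + exists Star. split.
      * intros j. destruct (le_ge_dec j i).
        -- rewrite <- Eu. auto.
        -- pose proof (Hcl i j ltac:(lia)) as H. rewrite Eu in H.
           destruct (u j); simpl in *; auto.
      * intros m Hm. specialize (Hm i). rewrite Eu in Hm. exact Hm.
    + set (a_ := fun k => match u (i + k) with Val b => b | _ => a end).
      assert (Hv : forall k, u (i + k) = Val (a_ k)).
      { intros k. pose proof (Hcl i (i+k) ltac:(lia)) as H. rewrite Eu in H.
        unfold a_. destruct (u (i+k)); simpl in *; tauto. }
      destruct (HC a_) as [l [Hub Hle]].
      { intros k. pose proof (Ha (i + k)) as H. rewrite Hv in H.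
        replace (S (i + k)) with (i + S k) in H by lia. rewrite Hv in H. exact H. }
      exists (Val l). split.
      * intros j. destruct (le_ge_dec j i).
        -- apply tl with (u i); auto. rewrite Eu.
           apply tl with (Val (a_ 0)). rewrite <- Hv, Nat.add_0_r, Eu. apply rl.
           exact (Hub 0).
        -- replace j with (i + (j - i)) by lia. rewrite Hv. exact (Hub _).
      * intros m Hm. pose proof (Hm i) as H. rewrite Eu in H.
        destruct m as [| |b]; simpl in H; try tauto.
        simpl. apply Hle. intros k. pose proof (Hm (i + k)) as H'.
        rewrite Hv in H'. exact H'.
  - exists Bot. split.
    + intros j. destruct (u j) eqn:E; simpl; auto. exfalso; apply Hn; exists j; congruence.
      exfalso; apply Hn; exists j; congruence.
    + intros; simpl; auto.
Qed.

Definition ev {Priv t1 t2} (v : lift (carrier Priv (TArr t1 t2))) (P : Pset Priv)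
  (d : carrier Priv t1) : lift (carrier Priv t2) :=
  match v with Val g => proj1_sig g P d | _ => Bot end.

Lemma ev_cont Priv t1 t2 (v : lift (carrier Priv (TArr t1 t2))) P :
  v <> Star -> continuous (le_dom Priv t1) (le_lift (le_dom Priv t2)) (ev v P).
Proof.
  intros Hv. destruct v as [| |g]; [|congruence|].
  - split.
    + intros x y _; simpl; auto.
    + intros u l _ _. split; intros; simpl; auto.
  - exact (proj2_sig g P).
Qed.

Lemma ev_asc Priv t1 t2 (u : nat -> lift (carrier Priv (TArr t1 t2))) :
  ascending (le_lift (le_dom Priv (TArr t1 t2))) u -> (forall i, u i <> Star) ->
  forall P d, ascending (le_lift (le_dom Priv t2)) (fun i => ev (u i) P d).
Proof.
  intros Ha Hns P d i. pose proof (Ha i) as H. pose proof (Hns i). pose proof (Hns (S i)).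
  destruct (u i) as [| |g]; simpl; auto; try congruence.
  destruct (u (S i)) as [| |g']; simpl in *; try tauto; try congruence. apply H.
Qed.

Lemma fun_lub Priv t1 t2 :
  chain_complete (le_lift (le_dom Priv t2)) ->
  forall u : nat -> lift (carrier Priv (TArr t1 t2)),
  ascending (le_lift (le_dom Priv (TArr t1 t2))) u -> (forall i, u i <> Star) ->
  exists h : carrier Priv (TArr t1 t2),
    (forall i, le_lift (le_dom Priv (TArr t1 t2)) (u i) (Val h)) /\
    forall P d, is_lub (le_lift (le_dom Priv t2)) (fun i => ev (u i) P d) (proj1_sig h P d).
Proof.
  intros HC u Ha Hns.
  assert (tl := le_lift_trans _ (le_dom_trans Priv t2)).
  assert (rl := le_lift_refl _ (le_dom_refl Priv t2)).
  assert (Hch := ev_asc Priv t1 t2 u Ha Hns).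
  set (H := fun P d => proj1_sig (constructive_indefinite_description _ (HC _ (Hch P d)))).
  assert (HH : forall P d, is_lub (le_lift (le_dom Priv t2)) (fun i => ev (u i) P d) (H P d)).
  { intros P d. unfold H. exact (proj2_sig (constructive_indefinite_description _ (HC _ (Hch P d)))). }
  assert (Hmon : forall P, monotone (le_dom Priv t1) (le_lift (le_dom Priv t2)) (H P)).
  { intros P x y Hxy. destruct (HH P x) as [_ Hl]. apply Hl. intros i.
    apply tl with (ev (u i) P y).
    - exact (proj1 (ev_cont _ _ _ (u i) P (Hns i)) x y Hxy).
    - exact (proj1 (HH P y) i). }
  assert (Hc : forall P, continuous (le_dom Priv t1) (le_lift (le_dom Priv t2)) (H P)).
  { intros P. split; [exact (Hmon P)|].
    intros w l Hw Hl. split.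
    - intros j. apply Hmon. exact (proj1 Hl j).
    - intros m Hm. apply (proj2 (HH P l)). intros i.
      destruct (ev_cont _ _ _ (u i) P (Hns i)) as [_ Hcont].
      apply (proj2 (Hcont w l Hw Hl)). intros j.
      apply tl with (H P (w j)); auto. exact (proj1 (HH P (w j)) i). }
  exists (exist _ H Hc). split.
  - intros i. pose proof (Hns i). destruct (u i) as [| |g] eqn:E; simpl; auto; try congruence.
    intros P d. pose proof (proj1 (HH P d) i) as K. cbv beta in K. rewrite E in K. exact K.
  - exact HH.
Qed.

Lemma dom_complete Priv t : chain_complete (le_dom Priv t).
Proof.
  induction t as [|t1 IH1 t2 IH2].
  - intros u Ha. exists (u 0). unfold le_dom in *; simpl in *.
    assert (E : forall i, u i = u 0).
    { induction i; auto. rewrite <- IHi. symmetry. apply Ha. }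
    split.
    + intros i. exact (E i).
    + intros m Hm. rewrite <- (Hm 0). reflexivity.
  - intros a Ha.
    assert (LC := lift_complete _ (le_dom_refl Priv t2) (le_dom_trans Priv t2) IH2).
    destruct (fun_lub Priv t1 t2 LC (fun i => Val (a i))) as [h [Hub Hl]].
    + intros i. exact (Ha i).
    + intros i; discriminate.
    + exists h. split.
      * intros i. exact (Hub i).
      * intros m Hm. change (forall P d, le_lift (le_dom Priv t2) (proj1_sig h P d) (proj1_sig m P d)).
        intros P d. apply (proj2 (Hl P d)). intros i. exact (Hm i P d).
Qed.

Lemma safe_down Priv (th : aty Priv) : forall v w,
  le_lift (le_dom Priv (erase th)) v w -> safe th w -> safe th v.
Proof.
  induction th as [|th1 IH1 Pi th2 IH2]; intros [| |g] [| |f]; simpl; try tauto.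
  intros Hle Hs P d HPi Hd. apply IH2 with (proj1_sig f P d); auto.
Qed.

Lemma safe_bot Priv (th : aty Priv) : safe th Bot.
Proof. destruct th; simpl; auto. Qed.

Theorem lemma1 (Priv : Type) (th : aty Priv)
  (u : nat -> lift (carrier Priv (erase th))) (l : lift (carrier Priv (erase th))) :
  ascending (le_lift (le_dom Priv (erase th))) u ->
  is_lub (le_lift (le_dom Priv (erase th))) u l ->
  (forall i, safe th (u i)) ->
  safe th l.
Proof.
  revert u l.
  induction th as [|th1 IH1 Pi th2 IH2]; intros u l Ha [Hub Hle] Hs.
  - destruct l as [| |b]; simpl; auto.
    specialize (Hle Bot). simpl in Hle. apply Hle. intros i.
    pose proof (Hs i). pose proof (Hub i). destruct (u i); simpl in *; auto.
  - assert (Hns : forall i, u i <> Star).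
    { intros i E. pose proof (Hs i) as K. rewrite E in K. exact K. }
    destruct l as [| |f]; simpl; auto.
    + specialize (Hle Bot). simpl in Hle. apply Hle. intros i.
      pose proof (Hns i). pose proof (Hub i). destruct (u i); simpl in *; auto.
    + intros P d HPi Hd.
      assert (LC := lift_complete _ (le_dom_refl Priv (erase th2))
                      (le_dom_trans Priv (erase th2)) (dom_complete Priv (erase th2))).
      destruct (fun_lub Priv (erase th1) (erase th2) LC u Ha Hns) as [h [Hub' Hl]].
      assert (Hfh : le_lift (le_dom Priv (erase th2)) (proj1_sig f P d) (proj1_sig h P d)).
      { exact (Hle (Val h) Hub' P d). }
      apply safe_down with (proj1_sig h P d); auto.
      apply IH2 with (fun i => ev (u i) P d).
      * exact (ev_asc Priv (erase th1) (erase th2) u Ha Hns P d).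
      * exact (Hl P d).
      * intros i. pose proof (Hs i) as K. destruct (u i) as [| |g]; simpl in *; auto; apply safe_bot.
Qed.
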